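(* Let $G$ be a graph of order $n\geq 3$ such that $d(u)+d(v)\geq n-1$ for every pair of non-adjacent vertices $u,v\in V(G)$. Then $prc(G)=\chi'(G)$.
   Context: A path in an edge-coloured graph is a rainbow path if its edges receive pairwise distinct colours. The proper rainbow connection number $prc(G)$ of a connected graph is the minimum number of colours in a proper edge-colouring (adjacent edges get distinct colours) such that every two distinct vertices are joined by a rainbow path. $\chi'(G)$ is the chromatic index; $d(u)$ is the degree of $u$. *)

(* Defs.v *)
From mathcomp Require Import all_boot.
Set Implicit Arguments. Unset Strict Implicit. Unset Printing Implicit Defensive.

Section Graphs.
Variable T : finType.
Implicit Types (e : rel T) (c : T -> T -> nat).

Definition simple_graph e : Prop := symmetric e /\ irreflexive e.

Definition deg e (u : T) : nat := #|[set v | e u v]|.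

Definition edge_colouring e (k : nat) c : Prop :=
  forall x y, e x y -> c x y = c y x /\ c x y < k.

Definition proper_colouring e c : Prop :=
  forall x y z, e x y -> e x z -> y != z -> c x y != c x z.

(* a rainbow path from u to v: the path u = x0, x1, ..., xm = v has pairwise
   distinct vertices and its edges have pairwise distinct colours *)
Definition rainbow_path e c (u v : T) : Prop :=
  exists p : seq T, [/\ path e u p, last u p = v, uniq (u :: p) &
                        uniq (pairmap c u p)].

Definition rainbow_connected e c : Prop :=
  forall u v, u != v -> rainbow_path e c u v.

Definition proper_k_colourable e (k : nat) : Prop :=
  exists c, edge_colouring e k c /\ proper_colouring e c.

Definition proper_rainbow_k_colourable e (k : nat) : Prop :=
  exists c, [/\ edge_colouring e k c, proper_colouring e c & rainbow_connected e c].

End Graphs.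

Definition is_least (P : nat -> Prop) (n : nat) : Prop :=
  P n /\ forall m, P m -> n <= m.

Definition is_chromatic_index (T : finType) (e : rel T) (k : nat) : Prop :=
  is_least (proper_k_colourable e) k.
Definition is_proper_rainbow_connection_number (T : finType) (e : rel T) (k : nat) : Prop :=
  is_least (proper_rainbow_k_colourable e) k.

(* Main.v *)
From Stdlib Require Import Classical.
Require Import Defs.
From mathcomp Require Import all_boot zify.

Lemma least_exists (P : nat -> Prop) n : P n -> exists m, is_least P m.
Proof.
elim: n {-2}n (leqnn n) => [|N IH] n Hn Pn.
  exists n; split => // m _; move: Hn; rewrite leqn0 => /eqP ->.
  by [].
destruct (classic (exists m, m < n /\ P m)) as [[m [Hm Pm]]|H].
  apply: (IH m) => //; rewrite -ltnS; exact: leq_trans Hm Hn.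
exists n; split => // m Pm; rewrite leqNgt; apply/negP => Hm; apply: H.
by exists m.
Qed.

Theorem proposition5p9 (T : finType) (e : rel T) :
  simple_graph e ->
  3 <= #|T| ->
  (forall u v : T, u != v -> ~~ e u v -> #|T| - 1 <= deg e u + deg e v) ->
  exists k : nat, is_chromatic_index e k /\ is_proper_rainbow_connection_number e k.
Proof.
move=> [esym eirr] n3 Hdeg.
have neq : forall x y, e x y -> x != y.
  by move=> x y exy; apply/eqP => Exy; move: exy; rewrite Exy eirr.
have diam : forall u v, u != v -> ~~ e u v -> exists w, e u w /\ e w v.
  move=> u v uv nuv.
  set A := [set w | e u w]; set B := [set w | e v w].
  case: (set_0Vmem (A :&: B)) => [AB0|[w]].
    exfalso.
    have := Hdeg u v uv nuv; rewrite /deg -/A -/B.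
    have HU := cardsU A B; rewrite AB0 cards0 subn0 in HU.
        have vA : v \notin A :|: B by rewrite !inE eirr orbF.
    have vU : u \notin v |: (A :|: B). by rewrite !inE eirr (esym v u) (negbTE nuv) !orbF.
    have := max_card (mem (u |: (v |: (A :|: B)))).
    rewrite cardsU1 vU cardsU1 vA HU /=.
    move: (#|A| + #|B|) (#|T|) n3 => a t; clear; lia.
  rewrite !inE => /andP[euw evw]; exists w; split => //; by rewrite esym.
have rb : forall k c, edge_colouring e k c -> proper_colouring e c -> rainbow_connected e c.
  move=> k c ec pc u v uv.
  case euv: (e u v).
    exists [:: v]; split => //=; [by rewrite euv|by rewrite inE uv].
  have [w [euw ewv]] := diam u v uv (negbT euv).
  exists [:: w; v]; split => //=.
  - by rewrite euw ewv.
  - by rewrite !inE negb_or neq //= uv (neq _ _ ewv).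
  - rewrite inE andbT (proj1 (ec _ _ euw)); apply: pc => //; by rewrite esym.
have ex0 : proper_k_colourable e (#|T| + #|T|).
  exists (fun x y => enum_rank x + enum_rank y); split.
    move=> x y _; split; first by rewrite addnC.
    have h1 := ltn_ord (enum_rank x); have h2 := ltn_ord (enum_rank y).
    move: (nat_of_ord (enum_rank x)) (nat_of_ord (enum_rank y)) h1 h2 => a b h1 h2.
    move: #|T| h1 h2 => t; clear; lia.
  move=> x y z _ _ yz; rewrite eqn_add2l; apply/negP => /eqP h.
  by move/eqP: yz; apply; apply: enum_rank_inj; apply: val_inj.
have [k [Pk Lk]] := @least_exists (proper_k_colourable e) _ ex0.
exists k; split; first by [].
split.
  have [c [ec pc]] := Pk; exists c; split => //; exact: rb ec pc.
move=> m [c [ec pc _]]; apply: Lk; by exists c.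
Qed.
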